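(* Let $c\in\mathbb{N}$ be a constant and let $g=(g_n)_{n\in\mathbb{N}}$, $g_n:\{0,1\}^n\to\{0,1\}^{n+c}$, be a generator. Suppose there exist a polynomial $p$, a constant $\epsilon>0$, and a strictly increasing infinite sequence $(n_i)_{i\in\mathbb{N}}\subseteq\mathbb{N}$ such that (1) $n_{i+1}\le p(n_i)$ for all $i$, and (2) for every $n\in\{n_i: i\in\mathbb{N}\}$, $H_{\mathrm{nh}}(g_n)\ge 2^{n^\epsilon}$ (respectively, $H_{\mathrm{dh}}(g_n)\ge 2^{n^\epsilon}$). Then there exists a generator $G_n:\{0,1\}^n\to\{0,1\}^{n+c}$ constructed from $g$ which is $c$ super-bits (respectively, $c$ demi-bits). Concretely, one may take $G(x)=g_{n_i}(x[1\ldots n_i])\cdot x[n_i+1\ldots n]$ for $x\in\{0,1\}^n$ with $n_i\le n<n_{i+1}$ (for $n\ge n_1$).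
   Context: A generator is a family $g_n:\{0,1\}^n\to\{0,1\}^{l(n)}$ computable by polynomial-size (nonuniform) circuits with $l(n)>n$. A nondeterministic circuit $D(x,w)$ accepts input $x$ (written $D(x)=1$) iff there is an assignment to the nondeterministic input bits $w$ with $D(x,w)=1$. The nondeterministic hardness $H_{\mathrm{nh}}(g_n)$ is the minimal $s$ such that some nondeterministic circuit $D$ of size at most $s$ satisfies $\Pr_{y\in\{0,1\}^{l(n)}}[D(y)=1]-\Pr_{x\in\{0,1\}^n}[D(g_n(x))=1]\ge 1/s$. The demi-hardness $H_{\mathrm{dh}}(g_n)$ is the minimal $s$ such that some nondeterministic circuit $D$ of size at most $s$ satisfies $\Pr_{y}[D(y)=1]\ge 1/s$ and $\Pr_x[D(g_n(x))=1]=0$. A generator $g_n:\{0,1\}^n\to\{0,1\}^{n+c}$ is $c$ super-bits (resp. $c$ demi-bits) if there is $\epsilon>0$ such that $H_{\mathrm{nh}}(g_n)\ge 2^{n^\epsilon}$ (resp. $H_{\mathrm{dh}}(g_n)\ge 2^{n^\epsilon}$) for all sufficiently large $n$. Probabilities are over the uniform distribution. $x[i\ldots j]$ denotes the substring of $x$ from position $i$ to $j$, and $\cdot$ denotes concatenation. *)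

(* Defs.v *)
From mathcomp Require Import all_boot.
From Stdlib Require Import Reals.

Set Implicit Arguments.
Unset Strict Implicit.
Unset Printing Implicit Defensive.

(* Wires are numbered: first the inputs, then the gates in order.      *)
(* A gate argument referring to a non-existent wire reads [false]      *)
(* (i.e. the constant 0 is freely available).                          *)
Inductive gate : Type :=
| GAnd of nat & nat
| GOr of nat & nat
| GNot of nat.

Definition eval_gate (vals : seq bool) (gt : gate) : bool :=
  match gt with
  | GAnd i j => nth false vals i && nth false vals j
  | GOr i j => nth false vals i || nth false vals j
  | GNot i => ~~ nth false vals i
  end.

Definition eval_wires (gs : seq gate) (inp : seq bool) : seq bool :=
  foldl (fun vals gt => rcons vals (eval_gate vals gt)) inp gs.

Record mcircuit := MCircuit { mc_gates : seq gate; mc_outs : seq nat }.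
Definition mc_size (C : mcircuit) : nat := size (mc_gates C).
Definition mc_eval (C : mcircuit) (inp : seq bool) : seq bool :=
  map (nth false (eval_wires (mc_gates C) inp)) (mc_outs C).

(* nondeterministic (single-output) circuit D(x,w): inputs are x followed
   by nd_nw nondeterministic bits w; output wire nd_out. *)
Record ndcircuit := NDCircuit { nd_nw : nat; nd_gates : seq gate; nd_out : nat }.
Definition nd_size (D : ndcircuit) : nat := size (nd_gates D).
Definition nd_accepts (D : ndcircuit) (x : seq bool) : bool :=
  [exists w : (nd_nw D).-tuple bool,
     nth false (eval_wires (nd_gates D) (x ++ w)) (nd_out D)].

(* Polynomials (natural coefficients; any polynomial bound on naturals *)
(* is dominated by one of these).                                      *)
Definition peval (p : seq nat) (n : nat) : nat :=
  \sum_(i < size p) nth 0 p i * n ^ i.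

Definition genfam (l : nat -> nat) : Type :=
  forall n : nat, n.-tuple bool -> (l n).-tuple bool.

Definition is_generator (l : nat -> nat) (g : genfam l) : Prop :=
  (forall n, n < l n) /\
  exists p : seq nat, forall n, exists C : mcircuit,
    mc_size C <= peval p n /\ forall x : n.-tuple bool, mc_eval C x = val (g n x).

Definition prob (m : nat) (P : pred (m.-tuple bool)) : R :=
  (INR #|[set y | P y]| / 2 ^ m)%R.

Definition Pr_rand (m : nat) (D : ndcircuit) : R :=
  prob (fun y : m.-tuple bool => nd_accepts D y).
Definition Pr_gen (l : nat -> nat) (g : genfam l) (n : nat) (D : ndcircuit) : R :=
  prob (fun x : n.-tuple bool => nd_accepts D (g n x)).

(* H_nh(g_n) >= T : every positive s for which some nondeterministic
   circuit of size <= s has distinguishing advantage >= 1/s satisfies T <= s *)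
Definition nh_hard_ge (l : nat -> nat) (g : genfam l) (n : nat) (T : R) : Prop :=
  forall (s : nat) (D : ndcircuit), 0 < s -> nd_size D <= s ->
    (/ INR s <= Pr_rand (l n) D - Pr_gen g n D)%R -> (T <= INR s)%R.

Definition dh_hard_ge (l : nat -> nat) (g : genfam l) (n : nat) (T : R) : Prop :=
  forall (s : nat) (D : ndcircuit), 0 < s -> nd_size D <= s ->
    (/ INR s <= Pr_rand (l n) D)%R -> Pr_gen g n D = 0%R -> (T <= INR s)%R.

Definition expbound (eps : R) (n : nat) : R := Rpower 2 (Rpower (INR n) eps).

Definition super_bits (l : nat -> nat) (g : genfam l) : Prop :=
  exists eps : R, (0 < eps)%R /\ exists N, forall n, N <= n -> nh_hard_ge g n (expbound eps n).

Definition demi_bits (l : nat -> nat) (g : genfam l) : Prop :=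
  exists eps : R, (0 < eps)%R /\ exists N, forall n, N <= n -> dh_hard_ge g n (expbound eps n).

(* x[1..m] as an m-tuple (padded with false if m > n; only used for m <= n) *)
Definition prefix_tuple (m n : nat) (x : n.-tuple bool) : m.-tuple bool :=
  [tuple nth false x i | i < m].

(* Main.v *)
Require Import Defs.
From mathcomp Require Import all_boot zify.
From Stdlib Require Import Reals Lra Psatz.
Set Implicit Arguments.
Unset Strict Implicit.
Unset Printing Implicit Defensive.

Lemma eval_wires_cat gs1 gs2 inp :
  eval_wires (gs1 ++ gs2) inp = eval_wires gs2 (eval_wires gs1 inp).
Proof. by rewrite /eval_wires foldl_cat. Qed.

Lemma eval_wires_cons gt gs inp :
  eval_wires (gt :: gs) inp = eval_wires gs (rcons inp (eval_gate inp gt)).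
Proof. by []. Qed.

Lemma size_eval_wires gs inp : size (eval_wires gs inp) = size inp + size gs.
Proof.
elim: gs inp => [|gt gs IH] inp; first by rewrite addn0.
by rewrite eval_wires_cons IH size_rcons addSnnS.
Qed.

Lemma nth_eval_wires gs inp i : i < size inp ->
  nth false (eval_wires gs inp) i = nth false inp i.
Proof.
elim: gs inp => [|gt gs IH] inp // Hi.
rewrite eval_wires_cons IH ?size_rcons; last by apply: ltnW.
by rewrite nth_rcons Hi.
Qed.

Definition rn (m k i : nat) := if i < m then i else i + k.
Definition rn_gate m k (gt : gate) :=
  match gt with
  | GAnd i j => GAnd (rn m k i) (rn m k j)
  | GOr i j => GOr (rn m k i) (rn m k j)
  | GNot i => GNot (rn m k i)
  end.

Lemma rn_eval_wires m k gs vals vals' :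
  m <= size vals -> size vals' = size vals + k ->
  (forall i, nth false vals' (rn m k i) = nth false vals i) ->
  forall i, nth false (eval_wires (map (rn_gate m k) gs) vals') (rn m k i) =
            nth false (eval_wires gs vals) i.
Proof.
elim: gs vals vals' => [|gt gs IH] vals vals' Hm Hs H //.
rewrite !eval_wires_cons; apply: IH.
- by rewrite size_rcons; apply: leqW.
- by rewrite !size_rcons Hs addSn.
have Hg : eval_gate vals' (rn_gate m k gt) = eval_gate vals gt.
  by case: gt => [a b|a b|a] /=; rewrite ?H.
move=> i; rewrite !nth_rcons.
case: (ltnP i (size vals)) => Hi.
  have Hr : rn m k i < size vals'.
    by rewrite /rn Hs; case: ifP => _; [apply: ltn_addr|rewrite ltn_add2r].
  by rewrite Hr -H.
have Hri : rn m k i = i + k by rewrite /rn ifN // -leqNgt (leq_trans Hm Hi).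
rewrite Hri Hs ltn_add2r eqn_add2r Hg.
case: ltngtP Hi => //.
Qed.
Fixpoint chk (W a : nat) (zs : seq (nat * bool)) : seq gate :=
  match zs with
  | [::] => [::]
  | (q, true) :: zs' => GAnd a q :: chk W.+1 W zs'
  | (q, false) :: zs' => GNot q :: GAnd a W :: chk W.+2 W.+1 zs'
  end.
Fixpoint chk_out (W a : nat) (zs : seq (nat * bool)) : nat :=
  match zs with
  | [::] => a
  | (q, true) :: zs' => chk_out W.+1 W zs'
  | (q, false) :: zs' => chk_out W.+2 W.+1 zs'
  end.

Lemma size_chk W a zs : size (chk W a zs) <= 2 * size zs.
Proof.
elim: zs W a => [|[q b] zs IH] W a //=.
case: b => /=; rewrite mulnS.
  by apply: leq_trans (IH _ _) _; apply: leqW.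
by rewrite !ltnS IH.
Qed.

Lemma chk_eval W a zs vals : size vals = W -> a < W -> all (fun qb => qb.1 < W) zs ->
  nth false (eval_wires (chk W a zs) vals) (chk_out W a zs) =
  nth false vals a && all (fun qb => nth false vals qb.1 == qb.2) zs.
Proof.
elim: zs W a vals => [|[q b] zs IH] W a vals Hs Ha Hall /=; first by rewrite andbT.
move: Hall => /= /andP [Hq Hall].
case: b.
  rewrite eval_wires_cons IH; last first.
  - by apply/allP => qb /(allP Hall) /ltnW.
  - by [].
  - by rewrite size_rcons Hs.
  rewrite nth_rcons Hs ltnn eqxx eqb_id /= -andbA; congr (_ && (_ && _)).
  apply: eq_in_all => qb /(allP Hall) Hqb.
  by rewrite nth_rcons Hs Hqb.
rewrite !eval_wires_cons IH; last first.
- by apply/allP => qb /(allP Hall) Hqb; apply: leq_trans Hqb _; apply: leqW.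
- by [].
- by rewrite !size_rcons Hs.
rewrite !nth_rcons !size_rcons Hs ltnn eqxx.
rewrite /= !nth_rcons ?size_rcons Hs ltnn eqxx Ha /=.
have -> : (~~ nth false vals q) = (nth false vals q == false) by case: (nth false vals q).
rewrite -andbA; congr (_ && (_ && _)).
apply: eq_in_all => qb /(allP Hall) Hqb.
rewrite !nth_rcons ?size_rcons Hs Hqb.
by rewrite ltnS (ltnW Hqb).
Qed.

Definition Dz (D : ndcircuit) (m' : nat) (z : seq bool) : ndcircuit :=
  let k := size z in
  let W := m' + k + nd_nw D + size (nd_gates D) in
  let zs := [seq (m' + j, nth false z j) | j <- iota 0 k] in
  NDCircuit (k + nd_nw D) (nd_gates D ++ GAnd (nd_out D) (nd_out D) :: chk W.+1 W zs)
            (chk_out W.+1 W zs).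

Lemma Dz_size D m' z : nd_size (Dz D m' z) <= nd_size D + (2 * size z).+1.
Proof.
rewrite /nd_size /= size_cat /= leq_add2l ltnS.
by apply: leq_trans (size_chk _ _ _) _; rewrite size_map size_iota.
Qed.

Lemma take_eq_all (w z : seq bool) k : size z = k -> k <= size w ->
  (take k w == z) = all (fun j => nth false w j == nth false z j) (iota 0 k).
Proof.
move=> Hz Hw; apply/eqP/allP.
  move=> <- j; rewrite mem_iota add0n => /andP [_ Hj].
  by rewrite nth_take.
move=> H; apply: (@eq_from_nth _ false); first by rewrite size_takel.
move=> j; rewrite size_takel // => Hjk.
rewrite nth_take //; apply/eqP; apply: H; by rewrite mem_iota add0n.
Qed.

Lemma Dz_val D m' (z y1 w' : seq bool) : size y1 = m' -> size w' = size z + nd_nw D ->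
  nth false (eval_wires (nd_gates (Dz D m' z)) (y1 ++ w')) (nd_out (Dz D m' z)) =
  nth false (eval_wires (nd_gates D) (y1 ++ w')) (nd_out D) && (take (size z) w' == z).
Proof.
move=> Hy Hw.
set E := eval_wires (nd_gates D) (y1 ++ w').
have HE : size E = m' + size z + nd_nw D + size (nd_gates D).
  by rewrite /E size_eval_wires size_cat Hy Hw !addnA.
rewrite /= eval_wires_cat eval_wires_cons -/E chk_eval.
- rewrite nth_rcons HE ltnn eqxx /= andbb; congr (_ && _).
  rewrite take_eq_all // ?Hw ?leq_addr // all_map.
  apply: eq_in_all => j; rewrite mem_iota add0n => /andP [_ Hj] /=.
  rewrite nth_rcons HE.
  have Hj2 : m' + j < m' + size z + nd_nw D + size (nd_gates D).
    by rewrite -!addnA ltn_add2l; apply: leq_trans Hj _; apply: leq_addr.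
  rewrite Hj2 /E nth_eval_wires ?nth_cat ?Hy ?size_cat ?Hy ?Hw; last first.
    by rewrite ltn_add2l; apply: leq_trans Hj _; apply: leq_addr.
  by rewrite ltnNge leq_addr /= addKn.
- by rewrite size_rcons HE.
- by [].
- apply/allP => qb /mapP [j]; rewrite mem_iota add0n => /andP [_ Hj] -> /=.
  apply: leq_trans (leqnSn _); rewrite -!addnA ltn_add2l.
  by apply: leq_trans Hj _; apply: leq_addr.
Qed.

Lemma Dz_accepts D m' (z y1 : seq bool) : size y1 = m' ->
  nd_accepts (Dz D m' z) y1 = nd_accepts D (y1 ++ z).
Proof.
move=> Hy; rewrite /nd_accepts.
apply/existsP/existsP.
  move=> [w']; rewrite Dz_val ?size_tuple // => /andP [H1 /eqP H2].
  have Hd : size (drop (size z) w') == nd_nw D by rewrite size_drop size_tuple addKn.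
  exists (Tuple Hd) => /=.
  by rewrite -catA -[in X in _ ++ (X ++ _)]H2 cat_take_drop.
move=> [w H]; exists (cat_tuple (in_tuple z) w).
rewrite Dz_val ?size_tuple //= ?size_cat ?size_tuple //.
by rewrite take_size_cat // catA H eqxx.
Qed.

Lemma sum_split N1 N2 (F : seq bool -> nat) :
  \sum_(t : (N1 + N2).-tuple bool) F t =
  \sum_(z : N2.-tuple bool) \sum_(t1 : N1.-tuple bool) F (t1 ++ z).
Proof.
rewrite pair_bigA /=.
pose h := fun p : N2.-tuple bool * N1.-tuple bool => cat_tuple p.2 p.1.
have hinj : injective h.
  move=> [a1 b1] [a2 b2] /(congr1 val) /= /eqP.
  rewrite eqseq_cat ?size_tuple // => /andP [/eqP Hb /eqP Ha].
  by congr pair; apply: val_inj.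
have hbij : bijective h.
  apply: inj_card_bij => //.
  by rewrite card_prod !card_tuple card_bool expnD mulnC.
rewrite (reindex h) //=; exact: onW_bij.
Qed.

Lemma card_sum n (P : pred (n.-tuple bool)) :
  #|[set y | P y]| = \sum_(y : n.-tuple bool) (P y : nat).
Proof.
rewrite -sum1_card big_mkcond /=; apply: eq_bigr => y _.
by rewrite inE; case: (P y).
Qed.

Section NS.
Variable ns : nat -> nat.
Hypothesis ns_inc : forall i, ns i < ns i.+1.

Lemma ns_le a b : a <= b -> ns a <= ns b.
Proof.
move=> /subnK <-; elim: (b - a) => [|d IH] //.
by rewrite addSn; apply: leq_trans IH (ltnW (ns_inc _)).
Qed.

Lemma ns_lt a b : a < b -> ns a < ns b.
Proof. by move=> H; apply: leq_trans (ns_inc a) (ns_le H). Qed.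

Lemma ns_ge i : i <= ns i.
Proof. by elim: i => // i IH; apply: leq_trans (ns_inc i). Qed.

Definition idx n := \max_(i < n.+1 | ns i <= n) i.

Lemma idx_eq i n : ns i <= n < ns i.+1 -> idx n = i.
Proof.
move=> /andP [H1 H2].
have Hi : i < n.+1 by rewrite ltnS (leq_trans (ns_ge i) H1).
apply/eqP; rewrite eqn_leq; apply/andP; split.
  apply/bigmax_leqP => j Hj.
  rewrite leqNgt; apply/negP => Hij.
  have := ns_le Hij; rewrite leqNgt => /negP; apply.
  by apply: leq_ltn_trans Hj H2.
exact: (leq_bigmax_cond (Ordinal Hi) H1).
Qed.

Lemma idx_ex n : ns 0 <= n -> exists i, ns i <= n < ns i.+1.
Proof.
elim: n => [|n IH] H.
  by exists 0; rewrite H /=; apply: leq_trans (ns_inc 0).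
case: (ltngtP (ns 0) n.+1) H => // H _.
  have [i /andP [H1 H2]] := IH H.
  case: (ltngtP n.+1 (ns i.+1)) H2.
  - by move=> H3 _; exists i; rewrite H3 (leqW H1).
  - by [].
  - by move=> H3 _; exists i.+1; rewrite H3 leqnn /=.
by exists 0; rewrite H leqnn /= -H ns_inc.
Qed.

Lemma idx_spec n : ns 0 <= n -> ns (idx n) <= n < ns (idx n).+1.
Proof. by move=> /idx_ex [i Hi]; rewrite (idx_eq Hi). Qed.
End NS.

Definition fit N (s : seq bool) : N.-tuple bool := [tuple nth false s j | j < N].

Lemma val_fit N s : size s = N -> val (fit N s) = s.
Proof.
move=> Hs; apply: (@eq_from_nth _ false); first by rewrite size_tuple.
move=> j; rewrite size_tuple => Hj.
by rewrite -[j]/(nat_of_ord (Ordinal Hj)) -tnth_nth tnth_mktuple.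
Qed.

Definition rawG c (g : genfam (fun n => n + c)) ns n (x : n.-tuple bool) : seq bool :=
  if ns 0 <= n then
    val (g (ns (idx ns n)) (prefix_tuple (ns (idx ns n)) x)) ++ drop (ns (idx ns n)) x
  else x ++ nseq c false.

Definition Gof c (g : genfam (fun n => n + c)) ns : genfam (fun n => n + c) :=
  fun n x => fit (n + c) (rawG g ns x).

Lemma Gof_val (c : nat) (g : genfam (fun n => n + c)) (ns : nat -> nat) (ns_inc : forall i, ns i < ns i.+1) i n (x : n.-tuple bool) :
  ns i <= n < ns i.+1 ->
  val (Gof g ns x) = val (g (ns i) (prefix_tuple (ns i) x)) ++ drop (ns i) x.
Proof.
move=> H; have Hi := idx_eq ns_inc H.
have H0 : ns 0 <= n by apply: leq_trans (ns_le ns_inc (leq0n i)) _; case/andP: H.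
rewrite /Gof val_fit /rawG H0 Hi //.
rewrite size_cat size_tuple size_drop size_tuple.
case/andP: H => H1 _; rewrite -addnA [c + _]addnC addnA subnKC //.
Qed.

Lemma Gof_val0 (c : nat) (g : genfam (fun n => n + c)) (ns : nat -> nat) n (x : n.-tuple bool) : n < ns 0 ->
  val (Gof g ns x) = val x ++ nseq c false.
Proof.
move=> H; rewrite /Gof val_fit /rawG ifN -?ltnNge //.
by rewrite size_cat size_tuple size_nseq.
Qed.

Lemma peval_mono p a b : a <= b -> peval p a <= peval p b.
Proof.
move=> H; apply: leq_sum => i _; rewrite leq_mul2l; apply/orP; right.
elim: (nat_of_ord i) => // e IH; exact: leq_mul H IH.
Qed.

Lemma map_nth_iota_drop (s : seq bool) m :
  map (nth false s) (iota m (size s - m)) = drop m s.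
Proof.
apply: (@eq_from_nth _ false); first by rewrite size_map size_iota size_drop.
move=> j; rewrite size_map size_iota => Hj.
by rewrite (nth_map 0) ?size_iota // nth_iota // nth_drop.
Qed.

Lemma nth_prefix m n (x : n.-tuple bool) i :
  nth false (prefix_tuple m x) i = if i < m then nth false x i else false.
Proof.
case: ifP => Hi.
  by rewrite -[i]/(nat_of_ord (Ordinal Hi)) -tnth_nth tnth_mktuple.
by rewrite nth_default // size_tuple leqNgt Hi.
Qed.

Lemma Gof_gen (c : nat) (g : genfam (fun n => n + c)) (ns : nat -> nat)
  (ns_inc : forall i, ns i < ns i.+1) : is_generator g -> is_generator (Gof g ns).
Proof.
move=> [Hl [q Hq]]; split => //; exists q => n.
case: (ltnP n (ns 0)) => H0.
  exists (MCircuit [::] (iota 0 n ++ nseq c n)); split => // x.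
  rewrite Gof_val0 // /mc_eval /= map_cat.
  have -> : map (nth false x) (iota 0 n) = x.
    by have := map_nth_iota_drop x 0; rewrite drop0 subn0 size_tuple.
  congr (_ ++ _); rewrite map_nseq nth_default //; by rewrite size_tuple.
have /andP [H1 H2] := idx_spec ns_inc H0.
set m := ns (idx ns n) in H1 H2 *.
have [C [HCs HC]] := Hq m.
exists (MCircuit (map (rn_gate m (n - m)) (mc_gates C))
                 (map (rn m (n - m)) (mc_outs C) ++ iota m (n - m))); split.
  rewrite /mc_size size_map; apply: leq_trans HCs (peval_mono _ H1).
move=> x; rewrite (Gof_val g ns_inc x (idx_spec ns_inc H0)) /mc_eval /= map_cat -/m.
congr (_ ++ _).
  rewrite -HC /mc_eval -map_comp; apply: eq_map => i /=.
  have Hm : m <= size (prefix_tuple m x) by rewrite size_tuple.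
  have Hs : size x = size (prefix_tuple m x) + (n - m) by rewrite !size_tuple subnKC.
  have Hn : forall j, nth false x (rn m (n - m) j) = nth false (prefix_tuple m x) j.
    move=> j; rewrite nth_prefix /rn; case: ifP => // Hj.
    rewrite nth_default // size_tuple; move/negbT: Hj; rewrite -leqNgt => Hj; lia.
  exact: (rn_eval_wires (mc_gates C) Hm Hs Hn i).
have := map_nth_iota_drop x m; rewrite size_tuple => <-; apply/eq_in_map => j.
rewrite mem_iota subnKC // => /andP [_ Hj].
by rewrite nth_eval_wires // size_tuple.
Qed.

Lemma expn_pow a b : expn a b = Nat.pow a b.
Proof. by elim: b => // b IH; rewrite expnS IH. Qed.

Lemma sum_lt (T : finType) (f g : T -> nat) : 0 < #|T| ->
  (forall t, f t < g t) -> \sum_t f t + #|T| <= \sum_t g t.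
Proof.
move=> HT H.
have -> : \sum_t f t + #|T| = \sum_t (f t).+1.
  by rewrite -sum1_card -big_split /=; apply: eq_bigr => t _; rewrite addn1.
by apply: leq_sum => t _; apply: H.
Qed.

Lemma averaging (T : finType) (a b : T -> nat) (s Q R1 : nat) :
  expn 2 (0) <= #|T| ->
  #|T| * Q + s * (\sum_t b t) * R1 <= s * (\sum_t a t) ->
  exists t, Q + s * b t * R1 <= s * a t.
Proof.
move=> HT H.
case: (boolP [exists t, Q + s * b t * R1 <= s * a t]) => [/existsP //|].
move=> /existsPn Hn; exfalso.
have := @sum_lt T (fun t => s * a t) (fun t => Q + s * b t * R1) HT.
have H' : forall t, s * a t < Q + s * b t * R1 by move=> t; rewrite ltnNge Hn.
move=> /(_ H'); rewrite big_split /= sum_nat_const -big_distrl -big_distrr /=.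
move=> H2; rewrite -big_distrr /= in H2.
move: HT H H2; rewrite expn0 !cardE => HT H H2; lia.
Qed.

Lemma A_split (c n m : nat) (D : ndcircuit) : m <= n ->
  \sum_(y : (n + c).-tuple bool) (nd_accepts D y : nat) =
  \sum_(z : (n - m).-tuple bool) \sum_(y1 : (m + c).-tuple bool)
     (nd_accepts (Dz D (m + c) z) y1 : nat).
Proof.
move=> H; move: (n - m) (subnKC H) => k Ek.
have E : n + c = m + c + k by rewrite -Ek; lia.
rewrite E (sum_split (m + c) k (fun s => (nd_accepts D s : nat))).
apply eq_bigr. intros z _. apply eq_bigr. intros y1 _.
by rewrite Dz_accepts // size_tuple.
Qed.

Lemma prefix_cat_tuple m (x1 : m.-tuple bool) (z : seq bool) :
  [tuple nth false (x1 ++ z) i | i < m] = x1.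
Proof.
apply: eq_from_tnth => j; rewrite tnth_mktuple (tnth_nth false) nth_cat size_tuple ltn_ord.
by [].
Qed.

Lemma B_split (c n m : nat) (g G : genfam (fun n => n + c)) (D : ndcircuit) : m <= n ->
  (forall x : n.-tuple bool, val (G n x) = val (g m (prefix_tuple m x)) ++ drop m x) ->
  \sum_(x : n.-tuple bool) (nd_accepts D (G n x) : nat) =
  \sum_(z : (n - m).-tuple bool) \sum_(x1 : m.-tuple bool)
     (nd_accepts (Dz D (m + c) z) (g m x1) : nat).
Proof.
move=> H HG.
pose F' := fun s : seq bool =>
  (nd_accepts D (val (g m [tuple nth false s i | i < m]) ++ drop m s) : nat).
rewrite (eq_bigr (fun x => F' (val x))); last by move=> x _; rewrite HG.
move: (n - m) (subnKC H) => k Ek.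
rewrite -Ek (sum_split m k F').
apply: eq_bigr => z _; apply: eq_bigr => x1 _.
rewrite /F' prefix_cat_tuple Dz_accepts ?size_tuple //.
by rewrite drop_size_cat // size_tuple.
Qed.

From Stdlib Require Import Lra Psatz.
Local Open Scope R_scope.

Lemma INR_expn2 k : INR (expn 2 k) = 2 ^ k.
Proof. by rewrite expn_pow pow_INR. Qed.

Lemma adv_iff (s A B n c : nat) : (0 < s)%nat ->
  (/ INR s <= INR A / 2 ^ (n + c) - INR B / 2 ^ n <->
   (expn 2 (n + c) + s * B * expn 2 c <= s * A)%nat).
Proof.
move=> Hs.
have Hs' : 0 < INR s by apply: lt_0_INR; apply/ltP.
have HP : 0 < 2 ^ n by apply: pow_lt; lra.
have HQ : 0 < 2 ^ c by apply: pow_lt; lra.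
have key : INR A / 2 ^ (n + c) - INR B / 2 ^ n - / INR s =
  (INR s * INR A - INR s * INR B * 2 ^ c - 2 ^ n * 2 ^ c) / (INR s * 2 ^ n * 2 ^ c).
  rewrite pow_add; field; lra.
have Y : 0 < INR s * 2 ^ n * 2 ^ c by apply: Rmult_lt_0_compat => //; apply: Rmult_lt_0_compat.
split.
  move=> H; apply/leP; apply: INR_le.
  rewrite plus_INR !mult_INR !INR_expn2 pow_add.
  have H1 : 0 <= (INR s * INR A - INR s * INR B * 2 ^ c - 2 ^ n * 2 ^ c) / (INR s * 2 ^ n * 2 ^ c)
    by rewrite -key; lra.
  have H2 : 0 <= (INR s * INR A - INR s * INR B * 2 ^ c - 2 ^ n * 2 ^ c).
    have := Rmult_le_pos _ _ H1 (Rlt_le _ _ Y).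
    rewrite /Rdiv Rmult_assoc Rinv_l; lra.
  lra.
move=> /leP /le_INR H; rewrite plus_INR !mult_INR !INR_expn2 pow_add in H.
have : 0 <= INR A / 2 ^ (n + c) - INR B / 2 ^ n - / INR s.
  rewrite key; apply: Rmult_le_pos; [lra | apply: Rlt_le; apply: Rinv_0_lt_compat; exact: Y].
set u := INR A / _; set v := INR B / _; set w := / INR s; move=> ?.
lra.
Qed.

Lemma prob_sum N (P : pred (N.-tuple bool)) :
  prob P = INR (\sum_(y : N.-tuple bool) (P y : nat)) / 2 ^ N.
Proof. by rewrite /prob card_sum. Qed.
Local Close Scope R_scope.

Lemma reduce_core (c n m s : nat) (g G : genfam (fun n => n + c)) (D : ndcircuit) :
  (m <= n) ->
  (forall x : n.-tuple bool, val (G n x) = val (g m (prefix_tuple m x)) ++ drop m x) ->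
  (expn 2 (n + c) + s * (\sum_(x : n.-tuple bool) (nd_accepts D (G n x) : nat)) * expn 2 c
     <= s * (\sum_(y : (n + c).-tuple bool) (nd_accepts D y : nat))) ->
  exists z : (n - m).-tuple bool,
  (expn 2 (m + c) + s * (\sum_(x1 : m.-tuple bool) (nd_accepts (Dz D (m + c) z) (g m x1) : nat))
      * expn 2 c
     <= s * (\sum_(y1 : (m + c).-tuple bool) (nd_accepts (Dz D (m + c) z) y1 : nat))).
Proof.
move=> Hmn HG.
rewrite (A_split c D Hmn) (B_split D Hmn HG) => H.
have E : expn 2 (n + c) = #|{: (n - m).-tuple bool}| * expn 2 (m + c).
  rewrite card_tuple card_bool -expnD; congr (expn 2 _); lia.
rewrite E in H; apply: (averaging _ H).
by rewrite card_tuple card_bool expn0 expn_gt0.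
Qed.

Lemma reduce_nh (c n m s : nat) (g G : genfam (fun n => n + c)) (D : ndcircuit) :
  (0 < s) -> (m <= n) ->
  (forall x : n.-tuple bool, val (G n x) = val (g m (prefix_tuple m x)) ++ drop m x) ->
  (/ INR s <= Pr_rand (n + c) D - Pr_gen G n D)%R ->
  exists D', (nd_size D' <= nd_size D + (2 * (n - m)).+1) /\
    (/ INR s <= Pr_rand (m + c) D' - Pr_gen g m D')%R.
Proof.
move=> Hs Hmn HG; rewrite /Pr_rand /Pr_gen !prob_sum adv_iff // => H.
have [z Hz] := reduce_core Hmn HG H.
exists (Dz D (m + c) z); split.
  by have := Dz_size D (m + c) z; rewrite size_tuple.
by rewrite /Pr_rand /Pr_gen !prob_sum adv_iff.
Qed.

Lemma reduce_dh (c n m s : nat) (g G : genfam (fun n => n + c)) (D : ndcircuit) :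
  (0 < s) -> (m <= n) ->
  (forall x : n.-tuple bool, val (G n x) = val (g m (prefix_tuple m x)) ++ drop m x) ->
  (/ INR s <= Pr_rand (n + c) D)%R -> Pr_gen G n D = 0%R ->
  exists D', (nd_size D' <= nd_size D + (2 * (n - m)).+1) /\
    (/ INR s <= Pr_rand (m + c) D')%R /\ Pr_gen g m D' = 0%R.
Proof.
move=> Hs Hmn HG H1 H2.
move: H1 H2; rewrite /Pr_rand /Pr_gen !prob_sum.
set A := \sum_(y : (n + c).-tuple bool) _; set B := \sum_(x : n.-tuple bool) _.
move=> H1 H2.
have HP : (0 < 2 ^ n)%R by apply: pow_lt; lra.
have HB : B = 0.
  apply: INR_eq; rewrite /=.
  have -> : INR B = (INR B / 2 ^ n * 2 ^ n)%R by field; lra.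
  by rewrite H2 Rmult_0_l.
have H1' : (/ INR s <= INR A / 2 ^ (n + c) - INR B / 2 ^ n)%R.
  by rewrite HB /= /Rdiv Rmult_0_l Rminus_0_r.
move: H1'; rewrite adv_iff // => H.
have [z Hz] := reduce_core Hmn HG H.
have Hbz : \sum_(x1 : m.-tuple bool) (nd_accepts (Dz D (m + c) z) (g m x1) : nat) = 0.
  move: HB; rewrite /B (B_split D Hmn HG) => /eqP; rewrite sum_nat_eq0.
  by move=> /forallP /(_ z) /eqP.
exists (Dz D (m + c) z); split.
  by have := Dz_size D (m + c) z; rewrite size_tuple.
rewrite /Pr_rand /Pr_gen !prob_sum; split; last by rewrite Hbz /= /Rdiv Rmult_0_l.
move: Hz; rewrite -adv_iff // Hbz /= /Rdiv Rmult_0_l Rminus_0_r //.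
Qed.

Lemma peval_bound p m :
  (peval p m <= (\sum_(i < size p) nth 0 p i) * expn m.+1 (size p))%N.
Proof.
rewrite /peval big_distrl /=; apply: leq_sum => i _.
rewrite -expn_pow leq_mul2l; apply/orP; right.
have H1 : (expn m i <= expn m.+1 i)%N.
  by elim: (nat_of_ord i) => // e IH; rewrite !expnS leq_mul.
apply: leq_trans H1 _; apply: leq_pexp2l => //; exact: ltnW (ltn_ord i).
Qed.
Local Open Scope R_scope.

Lemma exp_le a b : a <= b -> exp a <= exp b.
Proof. move=> [H|->]; [left; exact: exp_increasing|right; reflexivity]. Qed.

Lemma ln_le' a b : 0 < a -> a <= b -> ln a <= ln b.
Proof. move=> Ha [H|->]; [left; exact: ln_increasing|right; reflexivity]. Qed.

Lemma core_real (e K' : R) (D : nat) : 0 < e -> 1 <= K' -> (0 < D)%nat ->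
  exists X0, 1 <= X0 /\ forall x y s, X0 <= x -> 1 <= y -> y <= K' * x ^ D -> 1 <= s ->
    Rpower 2 (Rpower x e) <= s + 2 * y + 1 ->
    Rpower 2 (Rpower y (e / (2 * INR D))) <= s.
Proof.
move=> He HK HD.
have HDr : 1 <= INR D by apply: (le_INR 1); apply/leP.
set e' := e / (2 * INR D).
have Hl2 : / 2 < ln 2 by exact: ln_lt_2.
have HK0 : 0 <= ln K' by rewrite -ln_1; apply: ln_le'; lra.
set c1 := exp (e' * ln K').
have Hc1 : 0 < c1 by apply: exp_pos.
have Hl4 : 0 <= ln 4 by rewrite -ln_1; apply: ln_le'; lra.
set a := c1 * ln 2 + 2 * INR D / e.
have Ha : 0 <= a.
  rewrite /a; apply: Rplus_le_le_0_compat; first by apply: Rmult_le_pos; lra.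
  apply: Rmult_le_pos; [lra|]; apply: Rlt_le; apply: Rinv_0_lt_compat; lra.
set b := ln 4 + ln K'.
set T0 := (a + b) / ln 2 + 1.
have HT0 : 1 <= T0.
  rewrite /T0; have : 0 <= (a + b) / ln 2.
    apply: Rmult_le_pos; [rewrite /b; lra|]; apply: Rlt_le; apply: Rinv_0_lt_compat; lra.
  lra.
exists (Rmax 1 (exp (2 / e * ln T0))); split; first by apply: Rmax_l.
move=> x y s Hx Hy Hyx Hs Hmain.
have Hx1 : 1 <= x by apply: Rle_trans (Rmax_l _ _) Hx.
have Hx0 : 0 < x by lra.
set L := ln x.
have HL : 2 / e * ln T0 <= L.
  rewrite -(ln_exp (2 / e * ln T0)); apply: ln_le'; first by apply: exp_pos.
  by apply: Rle_trans (Rmax_r _ _) Hx.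
set t := exp (e * L / 2).
have Ht : T0 <= t.
  rewrite -(exp_ln T0); last lra.
  apply: exp_le.
  have : e * (2 / e * ln T0) <= e * L by apply: Rmult_le_compat_l; lra.
  have -> : e * (2 / e * ln T0) = 2 * ln T0 by field; lra.
  lra.
have HLt : L <= 2 / e * t.
  have := exp_ineq1_le (e * L / 2); rewrite -/t => H.
  have : e * L / 2 <= t by lra.
  move=> H2.
  have -> : L = 2 / e * (e * L / 2) by field; lra.
  apply: Rmult_le_compat_l => //.
  apply: Rmult_le_pos; [lra|]; apply: Rlt_le; apply: Rinv_0_lt_compat; lra.
have Hy0 : 0 < y by lra.
have HxD : 0 < x ^ D by apply: pow_lt.
have Hly : ln y <= ln K' + INR D * L.
  rewrite /L -ln_pow // -ln_mult; [|lra|by []].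
  by apply: ln_le'.
have Hye : Rpower y e' <= c1 * t.
  rewrite /Rpower /c1 /t -exp_plus; apply: exp_le.
  have -> : e * L / 2 = e' * (INR D * L) by rewrite /e'; field; lra.
  rewrite -Rmult_plus_distr_l; apply: Rmult_le_compat_l => //.
  rewrite /e'; apply: Rmult_le_pos; [lra|]; apply: Rlt_le; apply: Rinv_0_lt_compat; lra.
have Hl22 : ln (2 * y + 2) <= b + INR D * L.
  apply: (@Rle_trans _ (ln (4 * y))).
    by apply: ln_le'; lra.
  rewrite ln_mult; [rewrite /b; lra|lra|lra].
have Hxe : Rpower x e = t * t.
  by rewrite /Rpower /t -exp_plus; congr exp; rewrite /L; field.
have Hkey : Rpower y e' * ln 2 + ln (2 * y + 2) <= Rpower x e * ln 2.
  rewrite Hxe.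
  have HDL : INR D * L <= INR D * (2 / e * t) by apply: Rmult_le_compat_l; lra.
  have Ht1 : 1 <= t by lra.
  have H1 : Rpower y e' * ln 2 <= c1 * t * ln 2 by apply: Rmult_le_compat_r; lra.
  have Hab : a + b = (T0 - 1) * ln 2 by rewrite /T0; field; lra.
  have H2 : INR D * (2 / e * t) = (2 * INR D / e) * t by field; lra.
  have H3 : c1 * t * ln 2 + (b + (2 * INR D / e) * t) = a * t + b by rewrite /a; ring.
  have Hb : 0 <= b by rewrite /b; lra.
  have H4' : 0 <= b * (t - 1) by apply: Rmult_le_pos; lra.
  have H4 : a * t + b <= (a + b) * t by nra.
  have H5 : (a + b) * t <= t * t * ln 2.
    rewrite Hab; have : (T0 - 1) <= t by lra.
    move=> H6; have Ht0 : 0 <= t * ln 2 by apply: Rmult_le_pos; lra.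
    have H7 : 0 <= (t - (T0 - 1)) * (t * ln 2) by apply: Rmult_le_pos; lra.
    lra.
  lra.
have Hexp : Rpower 2 (Rpower y e') * (2 * y + 2) <= Rpower 2 (Rpower x e).
  have E2 : 2 * y + 2 = exp (ln (2 * y + 2)) by rewrite exp_ln; lra.
  move: Hkey; rewrite {2}E2 /Rpower -exp_plus => Hkey; apply: exp_le; lra.
have : Rpower 2 (Rpower y e') * (2 * y + 2) <= s * (2 * y + 2) by nra.
move=> H; apply: (Rmult_le_reg_r (2 * y + 2)) => //; lra.
Qed.

Lemma expn_monoL a b e : (a <= b)%nat -> (expn a e <= expn b e)%nat.
Proof. by move=> H; elim: e => // e IH; rewrite !expnS leq_mul. Qed.

Lemma anal (eps : R) (p : seq nat) : 0 < eps -> exists eps', 0 < eps' /\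
  exists N : nat, forall n m s : nat, (N <= n)%nat -> (n < peval p m)%nat -> (0 < s)%nat ->
    expbound eps m <= INR (s + (2 * (n - m)).+1) -> expbound eps' n <= INR s.
Proof.
move=> He.
set K := \sum_(i < size p) nth 0 p i.
set d := size p.
set Kn := (K * expn 2 d).+1.
have HK1 : 1 <= INR Kn by apply: (le_INR 1); apply/leP.
have [X0 [HX0 Hcore]] := core_real He HK1 (isT : (0 < d.+1)%nat).
exists (eps / (2 * INR d.+1)); split.
  apply: Rmult_lt_0_compat => //; apply: Rinv_0_lt_compat.
  have : 1 <= INR d.+1 by apply: (le_INR 1); apply/leP.
  lra.
have [n0 Hn0] := INR_archimed 1 X0 Rlt_0_1.
set M0 := n0.+1.
have HM0 : X0 <= INR M0.
  rewrite /M0 S_INR; lra.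
exists (K * expn M0 d).+1 => n m s Hn Hpm Hs Hb.
have Hm : (M0 <= m)%nat.
  rewrite leqNgt; apply/negP => Hlt.
  have := leq_trans Hpm (peval_bound p m); rewrite -/K -/d => H1.
  have H2 : (expn m.+1 d <= expn M0 d)%nat.
    by apply: expn_monoL.
  move: Hn; rewrite ltnNge => /negP; apply.
  by apply: leq_trans (ltnW H1) _; rewrite leq_mul2l H2 orbT.
have Hm1 : (1 <= m)%nat by apply: leq_trans Hm.
have Hnm : (n <= Kn * expn m d.+1)%nat.
  have := leq_trans Hpm (peval_bound p m); rewrite -/K -/d => H1.
  apply: leq_trans (ltnW H1) _.
  have H2 : (expn m.+1 d <= expn 2 d * expn m d.+1)%nat.
    apply: (@leq_trans (expn (2 * m) d)); first by apply: expn_monoL; lia.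
    rewrite expnMn leq_mul2l; apply/orP; right; rewrite expnS leq_pmull //.
  rewrite /Kn mulSn -mulnA; apply: leq_trans (leq_addl _ _); by rewrite leq_mul2l H2 orbT.
apply: (Hcore (INR m) (INR n) (INR s)).
- by apply: Rle_trans HM0 _; apply: le_INR; apply/leP.
- by apply: (le_INR 1); apply/leP; apply: leq_trans Hn.
- by rewrite -pow_INR -mult_INR -expn_pow; apply: le_INR; apply/leP.
- by apply: (le_INR 1); apply/leP.
- apply: Rle_trans Hb _; rewrite -[2 * INR n]/(INR 2 * INR n) -mult_INR.
  rewrite -[INR s + _ + 1]/(INR s + INR (2 * n) + INR 1) -!plus_INR.
  apply: le_INR; apply/leP; lia.
Qed.

Local Close Scope R_scope.

Theorem lemma2p1 (c : nat) (g : genfam (fun n => n + c)) (ns : nat -> nat)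
    (p : seq nat) (eps : R) :
  is_generator g ->
  (0 < eps)%R ->
  (forall i, ns i < ns i.+1) ->
  (forall i, ns i.+1 <= peval p (ns i)) ->
  ((forall i, nh_hard_ge g (ns i) (expbound eps (ns i))) ->
     exists G : genfam (fun n => n + c),
       [/\ is_generator G, super_bits G &
           forall i n (x : n.-tuple bool), ns i <= n < ns i.+1 ->
             val (G n x) = val (g (ns i) (prefix_tuple (ns i) x)) ++ drop (ns i) x])
  /\
  ((forall i, dh_hard_ge g (ns i) (expbound eps (ns i))) ->
     exists G : genfam (fun n => n + c),
       [/\ is_generator G, demi_bits G &
           forall i n (x : n.-tuple bool), ns i <= n < ns i.+1 ->
             val (G n x) = val (g (ns i) (prefix_tuple (ns i) x)) ++ drop (ns i) x]).
Proof.
move=> Hg He Hinc Hp.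
have [eps' [He' [N HN]]] := anal p He.
have Hform : forall i n (x : n.-tuple bool), ns i <= n < ns i.+1 ->
    val (Gof g ns x) = val (g (ns i) (prefix_tuple (ns i) x)) ++ drop (ns i) x.
  by move=> i n x H; apply: Gof_val.
have Hsetup : forall n, maxn N (ns 0) <= n ->
   [/\ N <= n, ns (idx ns n) <= n, n < peval p (ns (idx ns n)) &
     forall x : n.-tuple bool, val (Gof g ns x) =
       val (g (ns (idx ns n)) (prefix_tuple (ns (idx ns n)) x)) ++ drop (ns (idx ns n)) x].
  move=> n; rewrite geq_max => /andP [H1 H2].
  have Hs := idx_spec Hinc H2.
  split => //; first by case/andP: Hs.
    by case/andP: Hs => _ H; apply: leq_trans H (Hp _).
  by move=> x; apply: Hform.
have Hinv : forall s s' : nat, 0 < s -> s <= s' -> (/ INR s' <= / INR s)%R.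
  move=> s s' Hs Hss; apply: Rinv_le_contravar.
    by apply: lt_0_INR; apply/ltP.
  by apply: le_INR; apply/leP.
split.
  move=> Hh; exists (Gof g ns); split => //; first exact: Gof_gen.
  exists eps'; split => //; exists (maxn N (ns 0)) => n Hn s D Hs HDs Hadv.
  have [HNn Hmn Hpn HG] := Hsetup n Hn.
  have [D' [HD' Hadv']] := reduce_nh Hs Hmn HG Hadv.
  apply: (HN n (ns (idx ns n)) s) => //.
  apply: (Hh (idx ns n) (s + (2 * (n - ns (idx ns n))).+1) D') => //.
  - by rewrite addnS.
  - by apply: leq_trans HD' _; rewrite leq_add2r.
  - apply: Rle_trans Hadv'; apply: Hinv => //; exact: leq_addr.
move=> Hh; exists (Gof g ns); split => //; first exact: Gof_gen.
exists eps'; split => //; exists (maxn N (ns 0)) => n Hn s D Hs HDs Hadv H0.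
have [HNn Hmn Hpn HG] := Hsetup n Hn.
have [D' [HD' [Hadv' H0']]] := reduce_dh Hs Hmn HG Hadv H0.
apply: (HN n (ns (idx ns n)) s) => //.
apply: (Hh (idx ns n) (s + (2 * (n - ns (idx ns n))).+1) D') => //.
- by rewrite addnS.
- by apply: leq_trans HD' _; rewrite leq_add2r.
- apply: Rle_trans Hadv'; apply: Hinv => //; exact: leq_addr.
Qed.
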